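(* Let $N=\{1,\dots,n\}$, $\eta>0$, integers $B\ge1$, $Q\ge1$. Let $(A(k))_{k\ge0}$ be $n\times n$ matrices such that each $A(k)$ is doubly stochastic with positive diagonal entries and all positive entries at least $\eta$, and such that for every integer $k\ge0$ the directed graph $(N,\mathcal{E}(A(kB))\cup\cdots\cup\mathcal{E}(A((k+1)B-1)))$ is strongly connected. Let $x(0)\in\mathbb{R}^n$ have all components multiples of $1/Q$, and define componentwise $x_i(k+1)=\lfloor\sum_{j=1}^n a_{ij}(k)x_j(k)\rfloor$, where $\lfloor\cdot\rfloor$ is rounding down to the nearest multiple of $1/Q$. Let $U=\max_ix_i(0)$, $L=\min_ix_i(0)$ and $K=(U-L)Q$. If $k\ge nBK$, then all components of $x(k)$ are equal.
   Context: A matrix is doubly stochastic if it is nonnegative with all row and column sums equal to $1$. For a matrix $A=[a_{ij}]$, $\mathcal{E}(A)$ is the set of directed edges $(j,i)$ (including self-edges) with $a_{ij}>0$. *)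

(* Defs.v *)
From mathcomp Require Import all_boot all_order all_algebra.
From mathcomp Require Import reals.
Set Implicit Arguments. Unset Strict Implicit. Unset Printing Implicit Defensive.
Import Order.TTheory GRing.Theory Num.Theory.
Local Open Scope ring_scope.

Definition doubly_stochastic (R : realType) (n : nat) (A : 'M[R]_n) : Prop :=
  [/\ forall i j, 0 <= A i j,
      forall i, \sum_j A i j = 1 &
      forall j, \sum_i A i j = 1].

Definition edge_of (R : realType) (n : nat) (A : 'M[R]_n) (j i : 'I_n) : bool :=
  0 < A i j.

Definition window_rel (R : realType) (n : nat) (A : nat -> 'M[R]_n)
  (B k : nat) : rel 'I_n :=
  fun j i => [exists t : 'I_B, edge_of (A (k * B + t)%N) j i].

Definition strongly_connected (n : nat) (e : rel 'I_n) : Prop :=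
  forall u v : 'I_n, connect e u v.

Definition floorQ (R : realType) (Q : nat) (y : R) : R :=
  (Num.floor (y * Q%:R))%:~R / Q%:R.

Fixpoint traj (R : realType) (n : nat) (A : nat -> 'M[R]_n) (Q : nat)
  (x0 : 'I_n -> R) (k : nat) : 'I_n -> R :=
  match k with
  | 0 => x0
  | k'.+1 => fun i => floorQ Q (\sum_j A k' i j * traj A Q x0 k' j)
  end.

(* Main.v *)
Require Import Defs.
From mathcomp Require Import all_boot all_order all_algebra.
From mathcomp Require Import reals.
From mathcomp Require Import zify ring lra.
Import Order.TTheory GRing.Theory Num.Theory.
Set Implicit Arguments. Unset Strict Implicit.
Local Open Scope ring_scope.

Lemma sum_const_row (R : realType) n (a : 'M[R]_n) i (c : R) :
  \sum_j a i j = 1 -> \sum_j a i j * c = c.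
Proof. by move=> H; rewrite -mulr_suml H mul1r. Qed.

Lemma step_le (R : realType) n (a : 'M[R]_n) i (z : 'I_n -> int) (u : int) :
  (forall j, 0 <= a i j) -> \sum_j a i j = 1 -> (forall j, z j <= u) ->
  (Num.floor (\sum_j a i j * (z j)%:~R) <= u)%R.
Proof.
move=> Hn Hs Hz; rewrite -ltzD1 floor_lt_int.
have H1 : \sum_j a i j * (z j)%:~R <= (u%:~R : R).
  rewrite -(sum_const_row (u%:~R) Hs); apply: ler_sum => j _.
  by apply: ler_wpM2l => //; rewrite ler_int.
by apply: (le_lt_trans H1); rewrite ltr_int ltzD1.
Qed.

Lemma step_ge (R : realType) n (a : 'M[R]_n) i (z : 'I_n -> int) (l : int) :
  (forall j, 0 <= a i j) -> \sum_j a i j = 1 -> (forall j, l <= z j) ->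
  (l <= Num.floor (\sum_j a i j * (z j)%:~R))%R.
Proof.
move=> Hn Hs Hz; rewrite floor_ge_int.
rewrite -(sum_const_row (l%:~R) Hs); apply: ler_sum => j _.
by apply: ler_wpM2l => //; rewrite ler_int.
Qed.

Lemma step_lt (R : realType) n (a : 'M[R]_n) i j (z : 'I_n -> int) (u : int) :
  (forall j, 0 <= a i j) -> \sum_j a i j = 1 -> (forall j, z j <= u) ->
  0 < a i j -> z j < u ->
  (Num.floor (\sum_j a i j * (z j)%:~R) < u)%R.
Proof.
move=> Hn Hs Hz Ha Hj; rewrite floor_lt_int -subr_gt0.
rewrite -{1}(sum_const_row (u%:~R) Hs) -sumrB.
rewrite (bigD1 j) //=.
have H1 : 0 < a i j * u%:~R - a i j * (z j)%:~R :> R.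
  by rewrite -mulrBr mulr_gt0 // subr_gt0 ltr_int.
apply: (lt_le_trans H1); rewrite lerDl; apply: sumr_ge0 => k _; rewrite -mulrBr mulr_ge0 //.
by rewrite subr_ge0 ler_int.
Qed.

Lemma step_const (R : realType) n (a : 'M[R]_n) i (z : 'I_n -> int) (v : int) :
  \sum_j a i j = 1 -> (forall j, z j = v) ->
  Num.floor (\sum_j a i j * (z j)%:~R) = v.
Proof.
move=> Hs Hz; under eq_bigr => j _ do rewrite Hz.
by rewrite sum_const_row // intrKfloor.
Qed.

Lemma crossing n (e : rel 'I_n) (S : {set 'I_n}) a b :
  connect e a b -> a \notin S -> b \in S ->
  exists x y, [&& e x y, x \notin S & y \in S].
Proof.
move=> /connectP [p Hp ->]; elim: p a Hp => [|c p IH] a /=.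
  by move=> _ H1 H2; rewrite H2 in H1.
move=> /andP [Hac Hp] Ha Hl; case Hc: (c \in S).
  by exists a, c; rewrite Hac Ha Hc.
by apply: (IH c Hp) => //; rewrite Hc.
Qed.

Definition Bnd n (y : nat -> 'I_n -> int) t (u l : int) :=
  (forall i, y t i <= u) /\ (forall i, l <= y t i).
Definition Lev n (y : nat -> 'I_n -> int) t u : {set 'I_n} := [set i | y t i == u].
Definition cons n (y : nat -> 'I_n -> int) t := forall i j : 'I_n, y t i = y t j.

Definition Hyps (R : realType) n (A : nat -> 'M[R]_n) (y : nat -> 'I_n -> int) :=
  [/\ forall t i j, 0 <= A t i j, forall t i, \sum_j A t i j = 1,
      forall t i, 0 < A t i i &
      forall t i, y t.+1 i = Num.floor (\sum_j A t i j * (y t j)%:~R)].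

Lemma bnd_step R n A y t u l : @Hyps R n A y -> Bnd y t u l -> Bnd y t.+1 u l.
Proof.
case=> Hn Hs Hd Hy [Hu Hl]; split=> i; rewrite Hy.
  exact: step_le.
exact: step_ge.
Qed.

Lemma bnd_iter R n A y t u l : @Hyps R n A y -> Bnd y t u l -> forall d, Bnd y (t + d) u l.
Proof.
move=> H Hb; elim=> [|d IH]; first by rewrite addn0.
by rewrite addnS; exact: (bnd_step H IH).
Qed.

Lemma lev_step R n A y t u l : @Hyps R n A y -> Bnd y t u l ->
  Lev y t.+1 u \subset Lev y t u.
Proof.
move=> H Hb; case: (H) => Hn Hs Hd Hy; case: Hb => [Hu Hl].
apply/subsetP => i; rewrite !inE; apply: contraLR => Hne.
have Hlt : y t i < u by rewrite lt_neqAle Hne Hu.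
rewrite Hy lt_eqF //; exact: (step_lt (j:=i)).
Qed.

Lemma lev_iter R n A y t u l : @Hyps R n A y -> Bnd y t u l ->
  forall d, Lev y (t + d) u \subset Lev y t u.
Proof.
move=> H Hb; elim=> [|d IH]; first by rewrite addn0.
apply: subset_trans IH; rewrite addnS; exact: (lev_step H (bnd_iter H Hb d)).
Qed.

Lemma cons_step R n A y t : @Hyps R n A y -> cons y t -> cons y t.+1.
Proof.
case=> Hn Hs Hd Hy Hc i j.
rewrite !Hy (step_const (v := y t i)) // (step_const (v := y t i)) //.
Qed.

Lemma cons_iter R n A y t : @Hyps R n A y -> cons y t -> forall d, cons y (t + d).
Proof.
move=> H Hc; elim=> [|d IH]; first by rewrite addn0.
by rewrite addnS; exact: (cons_step H IH).
Qed.

Lemma window_shrink R n A y B m u l : @Hyps R n A y ->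
  strongly_connected (window_rel A B m) -> Bnd y (m * B) u l ->
  forall a b, a \notin Lev y (m * B) u -> b \in Lev y (m * B) u ->
  (#|Lev y (m * B + B) u| < #|Lev y (m * B) u|)%N.
Proof.
move=> H Hsc Hb a b Ha Hbb.
case: (H) => Hn Hs Hd Hy.
set S := Lev y (m * B) u.
rewrite ltnNge; apply/negP => Hge.
have Hr : forall r, (r <= B)%N -> Lev y (m * B + r) u = S.
  move=> r Hrb; have s1 := lev_iter H Hb r.
  have s2 : Lev y (m * B + B) u \subset Lev y (m * B + r) u.
    have -> : (m * B + B = (m * B + r) + (B - r))%N by rewrite -addnA subnKC.
    exact: (lev_iter H (bnd_iter H Hb r)).
  apply/eqP; rewrite eqEcard s1 /=.
  exact: (leq_trans Hge (subset_leq_card s2)).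
have [x [z /and3P [He Hx Hz]]] := crossing (Hsc a b) Ha Hbb.
case/existsP: He => t Ht; rewrite /edge_of in Ht.
have Ht1 := Hr t (ltnW (ltn_ord t)); have Ht2 := Hr t.+1 (ltn_ord t).
have Bt := bnd_iter H Hb t.
have Hz' : z \in Lev y (m * B + t.+1) u by rewrite Ht2.
have Hx' : x \notin Lev y (m * B + t) u by rewrite Ht1.
move: Hz' Hx'; rewrite !inE addnS Hy => /eqP Hz' Hx'.
have Hxu : y (m * B + t)%N x < u by rewrite lt_neqAle Hx' (proj1 Bt).
have := step_lt (Hn _ z) (Hs _ z) (proj1 Bt) Ht Hxu.
by rewrite Hz' ltxx.
Qed.

Lemma bnd_dec n (y : nat -> 'I_n -> int) t u l :
  Bnd y t u l -> #|Lev y t u| = 0%N -> Bnd y t (u - 1) l.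
Proof.
move=> [Hu Hl] /eqP; rewrite cards_eq0 => /eqP E; split=> // i.
have : i \notin Lev y t u by rewrite E inE.
rewrite inE => Hne; have : y t i < u by rewrite lt_neqAle Hne Hu.
by move=> ?; lia.
Qed.

Lemma window_step R n A y B m u l c : @Hyps R n A y -> (0 < n)%N ->
  strongly_connected (window_rel A B m) -> Bnd y (m * B) u l ->
  (1 <= c)%N -> (#|Lev y (m * B) u| <= c)%N ->
  cons y (m * B + B) \/ exists u' c', [/\ (1 <= c')%N, Bnd y (m * B + B) u' l,
     (#|Lev y (m * B + B) u'| <= c')%N &
     (n%:Z * (u' - l) + c'%:Z < n%:Z * (u - l) + c%:Z)].
Proof.
move=> H Hn0 Hsc Hb Hc Hcard.
have Hmeas : forall c0 : nat, n%:Z * (u - 1 - l) + n%:Z < n%:Z * (u - l) + c%:Z.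
  move=> _; have -> : n%:Z * (u - 1 - l) = n%:Z * (u - l) - n%:Z by ring.
  lia.
have Hcn : forall T, (#|Lev y T (u - 1)%R| <= n)%N.
  by move=> T; apply: (leq_trans (max_card _)); rewrite card_ord.
case: (posnP #|Lev y (m * B) u|) => [E0|Hpos].
  right; exists (u - 1), n; split => //; last exact: Hmeas.
  exact: (bnd_iter H (bnd_dec Hb E0)).
case: (set_0Vmem (~: Lev y (m * B) u)) => [Ec|[a Ha]].
  left; apply: (cons_iter H) => i j.
  have Hi : forall k, y (m * B) k = u.
    move=> k; apply/eqP.
    have : k \in ~: ~: Lev y (m * B) u by rewrite Ec inE in_set0.
    by rewrite setCK inE.
  by rewrite !Hi.
have [b Hb'] : exists b, b \in Lev y (m * B) u.
  by move: Hpos; rewrite card_gt0 => /set0Pn.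
rewrite inE in Ha.
have Hsh := window_shrink H Hsc Hb Ha Hb'.
have Hb2 := bnd_iter H Hb B.
case: (posnP #|Lev y (m * B + B) u|) => [E1|Hpos1].
  right; exists (u - 1), n; split => //; last exact: Hmeas.
  exact: (bnd_dec Hb2 E1).
right; exists u, #|Lev y (m * B + B) u|; split => //.
have : (#|Lev y (m * B + B) u| < c)%N by apply: leq_trans Hsh Hcard.
lia.
Qed.

Lemma iterate R n A y B l u0 : @Hyps R n A y -> (0 < n)%N ->
  (forall m, strongly_connected (window_rel A B m)) -> Bnd y 0 u0 l ->
  forall W, cons y (W * B) \/ exists u c, [/\ (1 <= c)%N, Bnd y (W * B) u l,
     (#|Lev y (W * B) u| <= c)%N &
     n%:Z * (u - l) + c%:Z + W%:Z <= n%:Z * (u0 - l) + n%:Z].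
Proof.
move=> H Hn0 Hsc Hb0; elim=> [|W IH].
  right; exists u0, n; rewrite mul0n; split => //; last by lia.
  by apply: (leq_trans (max_card _)); rewrite card_ord.
rewrite mulSnr; case: IH => [Hc|[u [c [Hc Hb Hcard Hm]]]].
  by left; apply: (cons_iter H Hc).
case: (window_step H Hn0 (Hsc W) Hb Hc Hcard) => [Hc'|[u' [c' [Hc' Hb' Hcard' Hm']]]].
  by left.
right; exists u', c'; split => //; lia.
Qed.

Lemma final R n A y B l u0 W : @Hyps R n A y -> (0 < n)%N ->
  (forall m, strongly_connected (window_rel A B m)) -> Bnd y 0 u0 l ->
  n%:Z * (u0 - l) <= W%:Z -> cons y (W * B).
Proof.
move=> H Hn0 Hsc Hb0 HW.
case: (iterate H Hn0 Hsc Hb0 W) => // [[u [c [Hc [Hu Hl] Hcard Hm]]]].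
have Hul : u - l <= 0.
  rewrite leNgt; apply/negP => Hp.
  have : n%:Z * 1 <= n%:Z * (u - l) by rewrite ler_wpM2l //; lia.
  lia.
have E : forall i, y (W * B)%N i = l by move=> i; have := Hu i; have := Hl i; lia.
by move=> i j; rewrite !E.
Qed.

Unset Implicit Arguments.

Theorem proposition3 (R : realType) (n : nat) (eta : R) (B Q : nat)
  (A : nat -> 'M[R]_n) (x0 : 'I_n -> R) (U L : R) (k : nat) :
  (0 < n)%N -> 0 < eta -> (1 <= B)%N -> (1 <= Q)%N ->
  (forall t, doubly_stochastic (A t)) ->
  (forall t i, 0 < A t i i) ->
  (forall t i j, 0 < A t i j -> eta <= A t i j) ->
  (forall m, strongly_connected (window_rel A B m)) ->
  (forall i, exists z : int, x0 i = z%:~R / Q%:R) ->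
  (exists i, x0 i = U) -> (forall i, x0 i <= U) ->
  (exists i, x0 i = L) -> (forall i, L <= x0 i) ->
  (n * B)%:R * ((U - L) * Q%:R) <= k%:R ->
  forall i j, traj A Q x0 k i = traj A Q x0 k j.
Proof.
move=> Hn0 _ HB HQ1 Hds Hdiag _ Hsc Hx0 [iU HU] HUb [iL HL] HLb Hk.
have HQ : Q%:R != 0 :> R by rewrite pnatr_eq0 -lt0n.
set y := fun t i => Num.floor (traj A Q x0 t i * Q%:R).
have Htraj : forall t i, traj A Q x0 t i = (y t i)%:~R / Q%:R.
  case=> [|t] i; rewrite /y /=.
    by have [z ->] := Hx0 i; rewrite divfK // intrKfloor.
  by rewrite /floorQ divfK // intrKfloor.
have Hyps : Hyps A y.
  split.
  - by move=> t i j; case: (Hds t).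
  - by move=> t i; case: (Hds t).
  - exact: Hdiag.
  move=> t i; rewrite {1}/y /= /floorQ divfK // intrKfloor; congr Num.floor.
  rewrite mulr_suml; apply: eq_bigr => j _.
  by rewrite Htraj -mulrA divfK.
have HxQ : forall i, x0 i * Q%:R = (y 0%N i)%:~R.
  by move=> i; rewrite [x0 i](Htraj 0%N) divfK.
set u0 := y 0%N iU; set l := y 0%N iL.
have Hb0 : Bnd y 0 u0 l.
  split=> i; rewrite /u0 /l /y /=; apply: le_floor; apply: ler_wpM2r => //.
  - by rewrite HU.
  - by rewrite HL.
have Hint : ((n * B)%:Z * (u0 - l) <= k%:Z)%R.
  rewrite -(ler_int R) intrM intrB -HxQ -HxQ HU HL -mulrBl.
  exact: Hk.
set W := (k %/ B)%N.
have Hkdiv : k = (W * B + k %% B)%N by rewrite /W -divn_eq.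
have Hmod : (k %% B < B)%N by rewrite ltn_pmod.
have HW : n%:Z * (u0 - l) <= W%:Z.
  rewrite leNgt; apply/negP => Hlt.
  have H1 : W%:Z + 1 <= n%:Z * (u0 - l) by lia.
  have H2 : B%:Z * (W%:Z + 1) <= B%:Z * (n%:Z * (u0 - l)) by rewrite ler_wpM2l.
  have E1 : (n * B)%:Z * (u0 - l) = B%:Z * (n%:Z * (u0 - l)).
    by rewrite PoszM; ring.
  have E2 : B%:Z * (W%:Z + 1) = (W * B)%:Z + B%:Z by rewrite PoszM; ring.
  have E3 : k%:Z = (W * B)%:Z + (k %% B)%:Z by rewrite {1}Hkdiv PoszD.
  lia.
have Hc := final Hyps Hn0 Hsc Hb0 HW.
move=> i j; rewrite !Htraj Hkdiv.
by rewrite (cons_iter Hyps Hc (k %% B) i j).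
Qed.
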